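(* Let $N,n_h,n_l$ be positive integers, $r\in\mathbb{R}^N$, and $R\in\mathbb{R}^{N\times n_h}$ with $R_{t,k}=r_{t-k+1}$ for $t\ge k$ and $R_{t,k}=0$ otherwise; assume $R^\top R$ is invertible. Let $\sigma^2>0$, $E:=R(R^\top R)^{-2}R^\top$ and $c:=\mathrm{tr}(\sigma^2(R^\top R)^{-1})$. For $l=(l_0,\dots,l_{n_l-1})^\top$ let $L(l)\in\mathbb{R}^{N\times(N+n_l-1)}$ have entries $L_{t,s}=l_{t+n_l-1-s}$ if $0\le t+n_l-1-s\le n_l-1$ and $0$ otherwise, let $Q_l$ be the $0/1$ selection matrix with $\mathrm{vec}(L(l))=Q_l l$ (column stacking), and set $M:=Q_l^\top(I_{N+n_l-1}\otimes E)Q_l$. Let $\gamma_2>0$, let $\lambda_1\ge\lambda_2\ge\dots\ge\lambda_{n_l}\ge0$ be the eigenvalues of $M$ and $v_1$ a unit-norm eigenvector for $\lambda_1$. Then a minimizer over $l\in\mathbb{R}^{n_l}$ of $(l^\top M l+c)^{-1}+\gamma_2\|l\|^2$ is $l^*=0$ if $\lambda_1\le\gamma_2c^2$, and $l^*=\sqrt{1/\sqrt{\gamma_2\lambda_1}-c/\lambda_1}\;v_1$ otherwise.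
   Context: $\otimes$ is the Kronecker product and $\|\cdot\|$ the Euclidean norm. $\gamma_2$ weights output-variance degradation against the (inverse) identification error. *)

(* Defs.v *)
From mathcomp Require Import all_boot all_order all_algebra.
From mathcomp Require Export mxtens.
Set Implicit Arguments. Unset Strict Implicit. Unset Printing Implicit Defensive.
Import Order.TTheory GRing.Theory Num.Theory.
Local Open Scope ring_scope.

(* 0-based access to a column vector; out of range gives 0 (never used
   out of range below). *)
Definition cvget (R : pzRingType) n (v : 'cV[R]_n) (i : nat) : R :=
  if @insub _ (fun k => k < n)%N _ i is Some j then v j 0 else 0.

(* R in R^{N x n_h}: R_{t,k} = r_{t-k+1} for t >= k (1-based),
   i.e. 0-based: R t k = r_(t-k) for k <= t. *)
Definition toepR (R : pzRingType) N nh (r : 'cV[R]_N) : 'M[R]_(N, nh) :=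
  \matrix_(t < N, k < nh) (if (k <= t)%N then cvget r (t - k) else 0).

Definition Lmat (R : pzRingType) N nl (l : 'cV[R]_nl) : 'M[R]_(N, N + nl.-1) :=
  \matrix_(t < N, s < N + nl.-1)
    (if (s <= t + nl.-1)%N && (t + nl.-1 - s <= nl.-1)%N
     then cvget l (t + nl.-1 - s) else 0).

(* column-stacking vectorization vec(A) *)
Definition vecc (R : pzRingType) m n (A : 'M[R]_(m, n)) : 'cV[R]_(n * m) :=
  (mxvec A^T)^T.

(* Q_l : the 0/1 selection matrix with vec(L(l)) = Q_l l; its j-th column
   is vec(L(e_j)). *)
Definition Qmat (R : pzRingType) N nl : 'M[R]_((N + nl.-1) * N, nl) :=
  \matrix_(i, j) vecc (Lmat N (delta_mx j 0 : 'cV[R]_nl)) i 0.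

Definition Emat (R : comUnitRingType) N nh (Rm : 'M[R]_(N, nh)) : 'M[R]_N :=
  Rm *m (invmx (Rm^T *m Rm) *m invmx (Rm^T *m Rm)) *m Rm^T.

Definition Mmat (R : comUnitRingType) N nl (E : 'M[R]_N) : 'M[R]_nl :=
  (Qmat R N nl)^T *m (tensmx (1%:M : 'M[R]_(N + nl.-1)) E) *m Qmat R N nl.

Definition sqnorm (R : pzRingType) n (v : 'cV[R]_n) : R := \sum_(i < n) v i 0 ^+ 2.

Definition objective (R : fieldType) nl (M : 'M[R]_nl) (c gamma2 : R)
  (l : 'cV[R]_nl) : R :=
  ((l^T *m M *m l) 0 0 + c)^-1 + gamma2 * sqnorm l.

(* Main.v *)
Require Import Defs.
From mathcomp Require Import all_boot all_order all_algebra.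
From mathcomp Require Import complex ring lra.
Import Order.TTheory GRing.Theory Num.Theory.
Local Open Scope ring_scope.

Section Ray.
Variable R : rcfType.
Local Notation C := (R[i]).
Local Notation f := (real_complex R).

Lemma f_real (r : R) : f r \is Num.real.
Proof.
by rewrite realE ler0c -[0 : C]/(f 0) lecR le_total.
Qed.

Lemma rayleigh n (M : 'M[R]_n) (lam : R) : M^T = M ->
  (forall mu, eigenvalue M mu -> mu <= lam) ->
  forall x : 'cV[R]_n, (x^T *m M *m x) 0 0 <= lam * (x^T *m x) 0 0.
Proof.
move=> Msym Hev x.
pose Mc := map_mx f M.
have Mh : Mc \is hermsymmx.
  apply: realsym_hermsym.
    apply/is_hermitianmxP; rewrite expr0 scale1r; apply/matrixP => i j.
    by rewrite !mxE -[in LHS]Msym mxE.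
  by apply/mxOverP => i j; rewrite mxE f_real.
have /orthomx_spectralP HA := hermitian_normalmx Mh.
set P := spectralmx Mc in HA; set d := spectral_diag Mc in HA.
have Pu : P \is unitarymx by apply: spectral_unitarymx.
have Punit : P \in unitmx by apply: spectral_unit.
have /mxOverP dreal := hermitian_spectral_diag_real Mh.
have ev : forall j, d 0 j <= f lam.
  move=> j.
  have rj : d 0 j = f (complex.Re (d 0 j)).
    apply: (eq_trans _ (esym (complexRe _))); apply/esym/Creal_ReP; apply: dreal.
  rewrite rj lecR; apply: Hev.
  rewrite eigenvalue_root_char -(fmorph_root f) map_char_poly.
  suff H : root (char_poly Mc) (d 0 j) by move: H; rewrite {1}rj; exact.
  rewrite -eigenvalue_root_char.
  apply/eigenvalueP; exists (row j P).
    by rewrite -row_mul {1}HA !mulmxA mulmxV // mul1mx row_mul row_diag_mx -scalemxAl -rowE.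
  apply/negP => /eqP h.
  have : row j (P *m invmx P) = 0 by rewrite row_mul h mul0mx.
  rewrite mulmxV // => /rowP /(_ j); rewrite !mxE eqxx => /eqP; rewrite oner_eq0.
  done.
rewrite -lecR -[_%:C%C]/(f _) rmorphM /=.
pose xc := map_mx f x.
have e1 : f ((x^T *m M *m x) 0 0) = (xc^T *m Mc *m xc) 0 0.
  by rewrite /xc map_trmx -!map_mxM [in RHS]mxE.
have e1' : f ((x^T *m x) 0 0) = (xc^T *m xc) 0 0.
  by rewrite /xc map_trmx -!map_mxM [in RHS]mxE.
have xcr : map_mx Num.conj xc = xc.
  by apply/matrixP => i j; rewrite !mxE conj_Creal // f_real.
pose y := P *m xc; pose yh := map_mx Num.conj y.
have Pinv : invmx P = (map_mx Num.conj P)^T.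
  by rewrite invmx_unitary //; apply/matrixP => a b; rewrite !mxE.
have e2 : xc^T *m Mc *m xc = yh^T *m diag_mx d *m y.
  by rewrite HA /yh /y map_mxM xcr trmx_mul -Pinv !mulmxA.
have e3 : xc^T *m xc = yh^T *m y.
  rewrite /yh /y map_mxM xcr trmx_mul -Pinv !mulmxA.
  by rewrite -(mulmxA _ (invmx P)) mulVmx // mulmx1.
rewrite e1 e1' e2 e3 mul_mx_diag.
have yhE : yh = map_mx Num.conj y by [].
clearbody yh y; subst yh.
rewrite !mxE mulr_sumr.
apply: ler_sum => k _; rewrite !mxE.
set z := y k 0.
have hz := mul_conjC_ge0 z.
rewrite [_ * d 0 k]mulrC -mulrA [z^* * z]mulrC.
by apply: ler_wpM2r => //; apply: ev.
Qed.
End Ray.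

Section K.
Variable R : rcfType.
Lemma key1 (a g c p s : R) : 0 < c -> 0 < g -> 0 <= p -> p <= a * s -> a <= g * c ^+ 2 -> 0 <= s ->
  (0 + c)^-1 + g * 0 <= (p + c)^-1 + g * s.
Proof.
move=> hc hg hp hps hag hs.
rewrite -subr_ge0.
have pc : p + c != 0 by rewrite gt_eqF // ltr_wpDl.
have -> : (p + c)^-1 + g * s - ((0 + c)^-1 + g * 0) = (g * s * c * (p + c) - p) / (c * (p + c)).
  by field; rewrite pc gt_eqF.
apply: divr_ge0; last by apply: mulr_ge0; [exact: ltW | rewrite addr_ge0 // ltW].
have h1 : 0 <= g * s * c * p by rewrite !mulr_ge0 // ltW.
have h2 : a * s <= g * c ^+ 2 * s by rewrite ler_wpM2r.
nra.
Qed.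

Lemma key2 (a g c q p s : R) : 0 < a -> 0 < c -> 0 < q -> q ^+ 2 = g * a ->
  0 <= p -> p <= a * s -> 0 <= s ->
  (((1 / q - c / a)) * a + c)^-1 + g * (1 / q - c / a) <= (p + c)^-1 + g * s.
Proof.
move=> ha hc hq hqg hp hps hs.
have -> : g = q ^+ 2 / a by rewrite hqg mulfK // gt_eqF.
have pc : p + c != 0 by rewrite gt_eqF // ltr_wpDl.
have t0 : 0 < a * s + c by rewrite ltr_wpDl // mulr_ge0 // ltW.
apply: (@le_trans _ _ ((a * s + c)^-1 + q ^+ 2 / a * s)).
  have hA : (1 / q - c / a) * a + c = a / q by field; rewrite !gt_eqF.
  rewrite hA invf_div -subr_ge0.
  have -> : (a * s + c)^-1 + q ^+ 2 / a * s - (q / a + q ^+ 2 / a * (1 / q - c / a))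
     = (a - q * (a * s + c)) ^+ 2 / (a ^+ 2 * (a * s + c)).
    by field; rewrite gt_eqF // gt_eqF // gt_eqF.
  by apply: divr_ge0; [exact: sqr_ge0 | rewrite mulr_ge0 // ?sqr_ge0 // ltW].
apply: lerD; last exact: lexx.
rewrite -subr_ge0.
have -> : (p + c)^-1 - (a * s + c)^-1 = (a * s - p) / ((p + c) * (a * s + c)).
  by field; rewrite pc gt_eqF.
apply: divr_ge0; first by rewrite subr_ge0.
by rewrite mulr_ge0 // ltW // ltr_wpDl.
Qed.
End K.

Section Aux.
Variable R : rcfType.

Lemma sqnormE n (v : 'cV[R]_n) : sqnorm v = (v^T *m v) 0 0.
Proof. by rewrite /sqnorm mxE; apply: eq_bigr => i _; rewrite !mxE expr2. Qed.

Lemma sqnorm_ge0 n (v : 'cV[R]_n) : 0 <= sqnorm v.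
Proof. by rewrite /sqnorm; apply: sumr_ge0 => i _; exact: sqr_ge0. Qed.

Lemma psd_gram m n (Y : 'M[R]_(m, n)) (x : 'cV_n) : 0 <= (x^T *m (Y^T *m Y) *m x) 0 0.
Proof.
by rewrite mulmxA -trmx_mul -mulmxA -sqnormE sqnorm_ge0.
Qed.
End Aux.

Theorem theorem2 (R : rcfType) (N nh nl : nat)
  (hN : (0 < N)%N) (hnh : (0 < nh)%N) (hnl : (0 < nl)%N)
  (r : 'cV[R]_N)
  (hinv : (toepR nh r)^T *m toepR nh r \in unitmx)
  (sigma2 : R) (hsigma : 0 < sigma2)
  (gamma2 : R) (hgamma : 0 < gamma2)
  (lam1 : R) (v1 : 'cV[R]_nl) :
  let Rm := toepR nh r in
  let E := Emat Rm in
  let c := \tr (sigma2 *: invmx (Rm^T *m Rm)) in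
  let M := Mmat nl E in
  eigenvalue M lam1 ->
  (forall mu, eigenvalue M mu -> mu <= lam1) ->
  M *m v1 = lam1 *: v1 ->
  sqnorm v1 = 1 ->
  let lstar : 'cV[R]_nl :=
    if lam1 <= gamma2 * c ^+ 2 then 0
    else Num.sqrt (1 / Num.sqrt (gamma2 * lam1) - c / lam1) *: v1 in
  forall l : 'cV[R]_nl, objective M c gamma2 lstar <= objective M c gamma2 l.
Proof.
move=> Rm E c M Hev Hmax Hv1 Hn1 lstar l.
pose G := Rm^T *m Rm; pose Gi := invmx G.
have GT : G^T = G by rewrite /G trmx_mul trmxK.
have GiT : Gi^T = Gi by rewrite /Gi trmx_inv GT.
pose X := Rm *m Gi.
have EX : E = X *m X^T.
  by rewrite /E /Emat /X trmx_mul GiT -/G -/Gi !mulmxA.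
pose Y := (tensmx (1%:M : 'M[R]_(N + nl.-1)) X)^T *m Qmat R N nl.
have MY : M = Y^T *m Y.
  rewrite /M /Mmat /Y trmx_mul trmxK EX -{1}(mul1mx (1%:M : 'M[R]_(N + nl.-1))).
  by rewrite -tensmx_mul trmx_tens trmx1 !mulmxA.
have Msym : M^T = M by rewrite MY trmx_mul trmxK.
have Mpsd : forall x : 'cV[R]_nl, 0 <= (x^T *m M *m x) 0 0.
  by move=> x; rewrite MY; exact: psd_gram.
have GiG : Gi *m G = 1%:M by rewrite mulVmx.
have XTX : X^T *m X = Gi.
  by rewrite /X trmx_mul GiT !mulmxA -(mulmxA Gi) -/G GiG mul1mx.
have trpos : 0 < \tr (X^T *m X).
  have hge : forall i, 0 <= (X^T *m X) i i.
    by move=> i; rewrite mxE; apply: sumr_ge0 => j _; rewrite mxE -expr2 sqr_ge0.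
  rewrite lt_def; apply/andP; split; last by apply: sumr_ge0 => i _; exact: hge.
  apply/eqP => h.
  have X0 : X = 0.
    apply/matrixP => j i; rewrite [RHS]mxE.
    have h2 := @psumr_eq0P _ _ _ _ (fun i _ => hge i) h i isT; rewrite mxE in h2.
    have h3 : forall k : 'I_N, true -> 0 <= X^T i k * X k i.
      by move=> k _; rewrite mxE -expr2 sqr_ge0.
    have := @psumr_eq0P _ _ _ _ h3 h2 j isT.
    by rewrite mxE => /eqP; rewrite mulf_eq0 orbb => /eqP.
  move: GiG; rewrite -XTX X0 mulmx0 mul0mx => /matrixP /(_ (Ordinal hnh) (Ordinal hnh)).
  by rewrite !mxE eqxx => /eqP; rewrite eq_sym oner_eq0.
have cpos : 0 < c by rewrite /c mxtraceZ -/G -/Gi -XTX mulr_gt0.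
have hs0 : 0 <= sqnorm l := @sqnorm_ge0 R _ l.
have hp0 := Mpsd l.
have hps : (l^T *m M *m l) 0 0 <= lam1 * sqnorm l.
  by rewrite sqnormE; exact: (@rayleigh R _ M lam1 Msym Hmax l).
have hlam0 : 0 <= lam1.
  by have := Mpsd v1; rewrite -mulmxA Hv1 -scalemxAr mxE -sqnormE Hn1 mulr1.
rewrite /objective /lstar; case: ifP => hcase.
  have z1 : ((0 : 'cV[R]_nl)^T *m M *m (0 : 'cV[R]_nl)) 0 0 = 0.
    by rewrite trmx0 !mul0mx mxE.
  have z2 : sqnorm (0 : 'cV[R]_nl) = 0 by rewrite sqnormE trmx0 mul0mx mxE.
  rewrite z1 z2.
  exact: (@key1 R lam1).
have hlt : gamma2 * c ^+ 2 < lam1 by rewrite ltNge hcase.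
have hlam : 0 < lam1 by apply: le_lt_trans hlt; rewrite mulr_ge0 // ?sqr_ge0 // ltW.
set q := Num.sqrt (gamma2 * lam1).
have hq : 0 < q by rewrite sqrtr_gt0 mulr_gt0.
have hq2 : q ^+ 2 = gamma2 * lam1 by rewrite sqr_sqrtr // mulr_ge0 // ltW.
have hss : 0 <= 1 / q - c / lam1.
  have -> : 1 / q - c / lam1 = (lam1 - c * q) / (q * lam1) by field; rewrite !gt_eqF.
  apply: divr_ge0; last by rewrite mulr_ge0 // ltW.
  rewrite subr_ge0; nra.
set k := Num.sqrt _.
have kk : k * k = 1 / q - c / lam1 by rewrite -expr2 sqr_sqrtr.
have trZ : (k *: v1)^T = k *: v1^T by apply/matrixP => a b; rewrite !mxE.
have e1 : ((k *: v1)^T *m M *m (k *: v1)) 0 0 = (1 / q - c / lam1) * lam1.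
  rewrite trZ -mulmxA -[M *m (k *: v1)]scalemxAr Hv1 -scalemxAr -scalemxAl !scalerA.
  rewrite mxE -scalemxAr mxE -sqnormE Hn1 mulr1 -kk; ring.
have e2 : sqnorm (k *: v1) = 1 / q - c / lam1.
  by rewrite sqnormE trZ -scalemxAl -scalemxAr scalerA mxE -sqnormE Hn1 mulr1.
rewrite e1 e2.
exact: (@key2 R lam1 gamma2 c q).
Qed.
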